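(* Let $n,m\ge 1$, let $A_1,\dots,A_m\in\mathbb{S}^n$ and $b\in\mathbb{R}^m$ be fixed, and let $p\ge 1$ be such that $\frac{p(p+1)}{2}>\operatorname{rank}\mathcal{A}$ and such that Assumption 1 holds for $p$. Then for almost every cost matrix $C\in\mathbb{S}^n$ (i.e., for all $C$ outside a Lebesgue-null subset of $\mathbb{S}^n$), the following holds: if $Y\in\mathcal{M}_p$ is a second-order critical point of (P), then $Y$ is globally optimal for (P) and $X=YY^\top$ is globally optimal for (SDP).
   Context: $\mathbb{S}^n$ is the space of real symmetric $n\times n$ matrices; $\langle U,V\rangle=\operatorname{tr}(U^\top V)$. The linear map $\mathcal{A}:\mathbb{S}^n\to\mathbb{R}^m$ is $\mathcal{A}(X)_i=\langle A_i,X\rangle$, with adjoint $\mathcal{A}^*(\nu)=\sum_i\nu_iA_i$; $\operatorname{rank}\mathcal{A}$ is the rank of this linear map. For $C\in\mathbb{S}^n$, (SDP) is: minimize $\langle C,X\rangle$ over $X\in\mathbb{S}^n$ with $\mathcal{A}(X)=b$, $X\succeq 0$ (feasible set assumed non-empty). For $p\ge1$, $\mathcal{M}_p=\{Y\in\mathbb{R}^{n\times p}:\mathcal{A}(YY^\top)=b\}$ and (P) is: minimize $g(Y)=\langle CY,Y\rangle$ over $Y\in\mathcal{M}_p$. Assumption 1 (for a given $p$ with $\mathcal{M}_p\neq\emptyset$): either (a) $A_1Y,\dots,A_mY$ are linearly independent in $\mathbb{R}^{n\times p}$ for all $Y\in\mathcal{M}_p$, or (b) $\operatorname{span}\{A_1Y,\dots,A_mY\}$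 has the same dimension for all $Y$ in some open neighborhood of $\mathcal{M}_p$ in $\mathbb{R}^{n\times p}$. For $Y\in\mathcal{M}_p$: the tangent space is $T_Y=\{\dot Y\in\mathbb{R}^{n\times p}:\langle A_iY,\dot Y\rangle=0,\ i=1,\dots,m\}$; $G(Y)\in\mathbb{R}^{m\times m}$ has entries $G_{ij}=\langle A_iY,A_jY\rangle$; $\mu(Y)=G(Y)^\dagger\mathcal{A}(CYY^\top)$ (Moore–Penrose pseudo-inverse); $S(Y)=C-\mathcal{A}^*(\mu(Y))$. $Y$ is a (first-order) critical point of (P) if $S(Y)Y=0$, and a second-order critical point if moreover $\langle\dot Y,S(Y)\dot Y\rangle\ge0$ for all $\dot Y\in T_Y$. *)

(* Defs.v *)
From HB Require Import structures.
From mathcomp Require Import all_boot all_order all_algebra.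
From mathcomp Require Import reals.
From Stdlib Require Import ClassicalEpsilon.

Set Implicit Arguments.
Unset Strict Implicit.
Unset Printing Implicit Defensive.

Import Order.TTheory GRing.Theory Num.Theory.
Local Open Scope ring_scope.

Section BMdefs.
Variable R : realType.

Definition inner (r c : nat) (U V : 'M[R]_(r, c)) : R := \tr (U^T *m V).

Definition sym_mx (n : nat) (X : 'M[R]_n) : Prop := X^T = X.

Definition psd (n : nat) (X : 'M[R]_n) : Prop :=
  forall v : 'cV[R]_n, 0 <= (v^T *m X *m v) 0 0.

Definition Aop (n m : nat) (A : 'I_m -> 'M[R]_n) (X : 'M[R]_n) : 'I_m -> R :=
  fun i => inner (A i) X.

Definition Aadj (n m : nat) (A : 'I_m -> 'M[R]_n) (nu : 'I_m -> R) : 'M[R]_n :=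
  \sum_(i < m) nu i *: A i.

(* rank of cal A: the rank of its matrix, whose i-th row is vec(A_i)
   (since <A_i, X> = vec(A_i) . vec(X)). *)
Definition rankA (n m : nat) (A : 'I_m -> 'M[R]_n) : nat :=
  \rank (\matrix_(i < m) mxvec (A i)).

Definition SDP_feasible (n m : nat) (A : 'I_m -> 'M[R]_n) (b : 'I_m -> R)
  (X : 'M[R]_n) : Prop :=
  sym_mx X /\ psd X /\ Aop A X = b.

Definition SDP_optimal (n m : nat) (A : 'I_m -> 'M[R]_n) (b : 'I_m -> R)
  (C X : 'M[R]_n) : Prop :=
  SDP_feasible A b X /\
  forall X', SDP_feasible A b X' -> inner C X <= inner C X'.

Definition Mp (n m p : nat) (A : 'I_m -> 'M[R]_n) (b : 'I_m -> R)
  (Y : 'M[R]_(n, p)) : Prop :=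
  Aop A (Y *m Y^T) = b.

Definition gcost (n p : nat) (C : 'M[R]_n) (Y : 'M[R]_(n, p)) : R :=
  inner (C *m Y) Y.

Definition P_optimal (n m p : nat) (A : 'I_m -> 'M[R]_n) (b : 'I_m -> R)
  (C : 'M[R]_n) (Y : 'M[R]_(n, p)) : Prop :=
  Mp A b Y /\ forall Z : 'M[R]_(n, p), Mp A b Z -> gcost C Y <= gcost C Z.

Definition spandim (n m p : nat) (A : 'I_m -> 'M[R]_n) (Y : 'M[R]_(n, p)) : nat :=
  \rank (\matrix_(i < m) mxvec (A i *m Y)).

Definition open_mx (n p : nat) (U : 'M[R]_(n, p) -> Prop) : Prop :=
  forall Y, U Y -> exists2 eps : R, 0 < eps &
    forall Z : 'M[R]_(n, p), (forall i j, `|Z i j - Y i j| < eps) -> U Z.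

Definition assumption1 (n m p : nat) (A : 'I_m -> 'M[R]_n) (b : 'I_m -> R) : Prop :=
  (forall Y : 'M[R]_(n, p), Mp A b Y ->
     forall c : 'I_m -> R, \sum_(i < m) c i *: (A i *m Y) = 0 -> forall i, c i = 0)
  \/
  (exists U : 'M[R]_(n, p) -> Prop,
     open_mx U /\ (forall Y, Mp A b Y -> U Y) /\
     exists r : nat, forall Y, U Y -> spandim A Y = r).

Definition tangent (n m p : nat) (A : 'I_m -> 'M[R]_n) (Y Yd : 'M[R]_(n, p)) : Prop :=
  forall i, inner (A i *m Y) Yd = 0.

Definition is_MP_pinv (k : nat) (G X : 'M[R]_k) : Prop :=
  G *m X *m G = G /\ X *m G *m X = X /\ (G *m X)^T = G *m X /\ (X *m G)^T = X *m G.

Definition MP_pinv (k : nat) (G : 'M[R]_k) : 'M[R]_k :=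
  epsilon (inhabits 0) (is_MP_pinv G).

Definition Gram (n m p : nat) (A : 'I_m -> 'M[R]_n) (Y : 'M[R]_(n, p)) : 'M[R]_m :=
  \matrix_(i, j) inner (A i *m Y) (A j *m Y).

Definition mu (n m p : nat) (A : 'I_m -> 'M[R]_n) (C : 'M[R]_n) (Y : 'M[R]_(n, p))
  : 'I_m -> R :=
  fun i => (MP_pinv (Gram A Y) *m \col_(j < m) Aop A (C *m Y *m Y^T) j) i 0.

Definition Smat (n m p : nat) (A : 'I_m -> 'M[R]_n) (C : 'M[R]_n) (Y : 'M[R]_(n, p))
  : 'M[R]_n := C - Aadj A (mu A C Y).

Definition critical (n m p : nat) (A : 'I_m -> 'M[R]_n) (b : 'I_m -> R)
  (C : 'M[R]_n) (Y : 'M[R]_(n, p)) : Prop :=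
  Mp A b Y /\ Smat A C Y *m Y = 0.

Definition second_order_critical (n m p : nat) (A : 'I_m -> 'M[R]_n) (b : 'I_m -> R)
  (C : 'M[R]_n) (Y : 'M[R]_(n, p)) : Prop :=
  critical A b C Y /\
  forall Yd : 'M[R]_(n, p), tangent A Y Yd -> 0 <= inner Yd (Smat A C Y *m Yd).

(* Lebesgue-null subsets of S^n, using the coordinates (X_ij)_{i <= j}
   identifying S^n with R^{n(n+1)/2}: N is covered, for every eps > 0, by a
   countable family of closed boxes of total volume <= eps. *)
Definition upper_idx (n : nat) := {ij : 'I_n * 'I_n | (ij.1 <= ij.2)%N}.

Definition sym_null (n : nat) (N : 'M[R]_n -> Prop) : Prop :=
  (forall X, N X -> sym_mx X) /\
  forall eps : R, 0 < eps ->
    exists lo hi : nat -> upper_idx n -> R,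
      (forall k ij, lo k ij <= hi k ij) /\
      (forall X, N X -> exists k, forall ij : upper_idx n,
          lo k ij <= X (val ij).1 (val ij).2 <= hi k ij) /\
      (forall K : nat, \sum_(k < K) \prod_(ij : upper_idx n) (hi k ij - lo k ij) <= eps).

End BMdefs.

(* Main.v *)
Require Import Defs.
From HB Require Import structures.
From mathcomp Require Import all_boot all_order all_algebra.
From mathcomp Require Import reals.
From mathcomp Require Import ring lra zify.
From Stdlib Require Import Classical ClassicalEpsilon.
From Stdlib Require Cantor.
Set Implicit Arguments.
Unset Strict Implicit.
Unset Printing Implicit Defensive.
Import Order.TTheory GRing.Theory Num.Theory.
Local Open Scope ring_scope.


Section LA.
Variable R : realType.

Definition bf n (X : 'M[R]_n) (u v : 'cV[R]_n) : R := (u^T *m X *m v) 0 0.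

Lemma bfDl n (X : 'M[R]_n) u1 u2 v : bf X (u1 + u2) v = bf X u1 v + bf X u2 v.
Proof. by rewrite /bf linearD /= !mulmxDl mxE. Qed.
Lemma bfDr n (X : 'M[R]_n) u v1 v2 : bf X u (v1 + v2) = bf X u v1 + bf X u v2.
Proof. by rewrite /bf mulmxDr mxE. Qed.
Lemma bfZl n (X : 'M[R]_n) c u v : bf X (c *: u) v = c * bf X u v.
Proof. by rewrite /bf linearZ /= -!scalemxAl mxE. Qed.
Lemma bfZr n (X : 'M[R]_n) c u v : bf X u (c *: v) = c * bf X u v.
Proof. by rewrite /bf -!scalemxAr mxE. Qed.
Lemma bfN n (X : 'M[R]_n) u v : bf X (- u) v = - bf X u v.
Proof. by rewrite -scaleN1r bfZl mulN1r. Qed.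
Lemma bfNr n (X : 'M[R]_n) u v : bf X u (- v) = - bf X u v.
Proof. by rewrite -scaleN1r bfZr mulN1r. Qed.
Lemma bf_sym n (X : 'M[R]_n) u v : sym_mx X -> bf X u v = bf X v u.
Proof.
move=> hX; rewrite /bf; transitivity ((u^T *m X *m v)^T 0 0); first by rewrite [in RHS]mxE.
by rewrite !trmx_mul trmxK hX mulmxA.
Qed.
Lemma bf_delta n (X : 'M[R]_n) i j : bf X (delta_mx i 0) (delta_mx j 0) = X i j.
Proof.
by rewrite /bf trmx_delta -rowE -colE !mxE.
Qed.

Lemma mxBE m n (A B : 'M[R]_(m,n)) i j : (A - B) i j = A i j - B i j.
Proof. by rewrite !mxE. Qed.
Lemma mxDE m n (A B : 'M[R]_(m,n)) i j : (A + B) i j = A i j + B i j.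
Proof. by rewrite !mxE. Qed.
Lemma mxZE m n c (A : 'M[R]_(m,n)) i j : (c *: A) i j = c * A i j.
Proof. by rewrite !mxE. Qed.

Lemma mx11_mul (a b : 'M[R]_1) : (a *m b) 0 0 = a 0 0 * b 0 0.
Proof. by rewrite mxE big_ord1. Qed.
Lemma tr11 (a : 'M[R]_1) : \tr a = a 0 0.
Proof. by rewrite /mxtrace big_ord1. Qed.

Lemma psd_tr n (S X : 'M[R]_n) : psd S -> psd X -> sym_mx X -> 0 <= \tr (S *m X).
Proof.
move=> hS.
suff H : forall k (X : 'M[R]_n), psd X -> sym_mx X ->
   (forall i j : 'I_n, (i < n - k)%N -> X i j = 0) -> 0 <= \tr (S *m X).
  by move=> hX sX; apply: (H n) => // i j; rewrite subnn.
elim=> [|k IH] {}X hX sX h0.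
  have -> : X = 0 by apply/matrixP=> i j; rewrite mxE h0 // subn0.
  by rewrite mulmx0 linear0.
case: (leqP n k) => [lenk|ltkn].
  apply: IH => // i j; have -> : (n - k = 0)%N by apply/eqP; rewrite subn_eq0.
  by [].
have hl : (n - k.+1 < n)%N by lia.
set l := Ordinal hl.
have hxl : forall v, 0 <= bf X v v by move=> v; exact: hX.
set a := X l l.
have a0 : 0 <= a by rewrite /a -bf_delta.
have [az|ap] := eqVneq a 0.
  have rowl : forall j, X l j = 0.
    move=> j; apply/eqP/negPn/negP => hne.
    pose s := - (X j j + 1) / (2 * X l j).
    have := hxl (s *: delta_mx l 0 + delta_mx j 0).
    rewrite !(bfDl, bfDr, bfZl, bfZr) !bf_delta -/a az.
    have -> : X j l = X l j by rewrite -{1}sX mxE.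
    move=> H.
    have e : s * X l j = - (X j j + 1) / 2 by rewrite /s; field.
    clearbody s; lra.
  apply: IH => // i j hi.
  case: (ltnP i (n - k.+1)) => hi2; first exact: h0.
  have -> : i = l by apply/val_inj; rewrite /l /=; lia.
  exact: rowl.
have apos : 0 < a by rewrite lt_def ap.
set x := col l X.
pose X' := X - a^-1 *: (x *m x^T).
have sX' : sym_mx X'.
  by rewrite /sym_mx /X' linearB /= linearZ /= trmx_mul trmxK sX.
have xe : forall v, (x^T *m v) 0 0 = bf X (delta_mx l 0) v.
  move=> v; rewrite /bf /x colE trmx_mul trmx_delta sX.
  by [].
have hX' : psd X'.
  move=> v; rewrite -/(bf X' v v).
  have -> : bf X' v v = bf X v v - a^-1 * ((x^T *m v) 0 0)^+2.
    rewrite /bf /X' mulmxBr mulmxBl mxBE; congr (_ - _).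
    rewrite -scalemxAr -scalemxAl mxZE; congr (_ * _).
    rewrite mulmxA -(mulmxA (v^T *m x)) mx11_mul expr2; congr (_ * _).
    transitivity ((v^T *m x)^T 0 0); first by rewrite [in RHS]mxE.
    by rewrite trmx_mul trmxK.
  rewrite xe; set s := bf X (delta_mx l 0) v.
  have := hxl (v - (s / a) *: delta_mx l 0).
  rewrite bfDl !bfDr !bfN !bfNr !bfZl !bfZr bf_delta -/a (bf_sym v _ sX) -/s.
  move=> H.
  have e : s / a * s + s / a * (s / a * a) = 2 * (a^-1 * s^+2).
    field; by rewrite ap.
  have e2 : s / a * s = a^-1 * s^+2 by rewrite mulrC mulrA mulrC expr2 mulrA.
  lra.
have h0' : forall i j : 'I_n, (i < n - k)%N -> X' i j = 0.
  move=> i j hi; rewrite /X' !mxE big_ord1 !mxE.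
  case: (ltnP i (n - k.+1)) => hi2.
    by rewrite (h0 i j) // (h0 i l) // mul0r mulr0 subr0.
  have -> : i = l by apply/val_inj; rewrite /l /=; lia.
  have : X j l = X l j by rewrite -{1}sX mxE.
  move=> ->; rewrite -/a mulrA mulVf ?ap // mul1r subrr //.
have H1 := IH X' hX' sX' h0'.
have -> : X = X' + a^-1 *: (x *m x^T) by rewrite /X' subrK.
rewrite mulmxDr linearD /= -scalemxAr linearZ /=.
apply: addr_ge0; first exact: H1.
apply: mulr_ge0; first by rewrite invr_ge0.
rewrite mulmxA mxtrace_mulC mulmxA tr11; exact: hS.
Qed.

End LA.

Section Opt.
Variable R : realType.
Variables (n m p : nat) (A : 'I_m -> 'M[R]_n) (b : 'I_m -> R).
Hypothesis Asym : forall i, sym_mx (A i).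

Lemma tr_Aadj nu (X : 'M[R]_n) : \tr (Aadj A nu *m X) = \sum_i nu i * inner (A i) X.
Proof.
rewrite /Aadj mulmx_suml linear_sum /=; apply: eq_bigr => i _.
by rewrite -scalemxAl linearZ /= /inner Asym.
Qed.

Lemma inner_C (C S : 'M[R]_n) nu X : sym_mx C -> C = S + Aadj A nu ->
  inner C X = \tr (S *m X) + \sum_i nu i * inner (A i) X.
Proof.
move=> sC eC; rewrite /inner sC {1}eC mulmxDl linearD /= tr_Aadj //.
Qed.

Lemma psd_YYt (Y : 'M[R]_(n,p)) : psd (Y *m Y^T).
Proof.
move=> v; rewrite !mulmxA -(mulmxA (v^T *m Y)).
have -> : Y^T *m v = (v^T *m Y)^T by rewrite trmx_mul trmxK.
rewrite mxE; apply: sumr_ge0 => i _; rewrite [X in _ * X]mxE -expr2; exact: sqr_ge0.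
Qed.

Lemma sym_YYt (Y : 'M[R]_(n,p)) : sym_mx (Y *m Y^T).
Proof. by rewrite /sym_mx trmx_mul trmxK. Qed.

Lemma opt_of_psd (C : 'M[R]_n) (Y : 'M[R]_(n,p)) nu :
  sym_mx C -> Mp A b Y -> C = Smat A C Y + Aadj A nu ->
  Smat A C Y *m Y = 0 -> psd (Smat A C Y) ->
  P_optimal A b C Y /\ SDP_optimal A b C (Y *m Y^T).
Proof.
move=> sC hY eC SY pS.
have fY : SDP_feasible A b (Y *m Y^T).
  by split; [exact: sym_YYt | split; [exact: psd_YYt | exact: hY]].
have hsdp : SDP_optimal A b C (Y *m Y^T).
  split => // X' [sX' [pX' hX']].
  rewrite !(inner_C _ sC eC) mulmxA SY mul0mx linear0 add0r.
  have e1 : \sum_i nu i * inner (A i) X' = \sum_i nu i * b i.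
    by apply: eq_bigr => i _; rewrite -hX'.
  have e2 : \sum_i nu i * inner (A i) (Y *m Y^T) = \sum_i nu i * b i.
    by apply: eq_bigr => i _; rewrite -hY.
  rewrite e1 e2 lerDr. exact: psd_tr.
split => //; split => // Z hZ.
have gc : forall W : 'M[R]_(n,p), gcost C W = inner C (W *m W^T).
  move=> W; rewrite /gcost /inner trmx_mul mxtrace_mulC sC mulmxA.
  by rewrite mxtrace_mulC.
rewrite !gc; apply: hsdp.2.
by split; [exact: sym_YYt | split; [exact: psd_YYt | exact: hZ]].
Qed.

Lemma deficient_psd (C : 'M[R]_n) (Y : 'M[R]_(n,p)) :
  (\rank Y < p)%N -> second_order_critical A b C Y -> psd (Smat A C Y).
Proof.
move=> rk [_ so].
have : ~~ row_free Y^T by rewrite /row_free mxrank_tr neq_ltn rk.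
move=> nf.
have [v vne vY] : exists2 v : 'rV[R]_p, v != 0 & v *m Y^T = 0.
  have H : ~ (forall v : 'rV[R]_p, v *m Y^T = 0 -> v = 0).
    by move=> H; move/negP: nf; apply; exact: inj_row_free.
  apply: NNPP => H2; apply: H => v hv; apply: NNPP => hv0; apply: H2.
  by exists v => //; apply/eqP.
move=> u.
have tg : tangent A Y (u *m v).
  move=> i; rewrite /inner mulmxA mxtrace_mulC !mulmxA.
  rewrite trmx_mul Asym mulmxA vY.
  by rewrite !mul0mx linear0.
have := so _ tg.
rewrite /inner trmx_mul !mulmxA mxtrace_mulC !mulmxA tr11.
rewrite -!mulmxA mulmxA mx11_mul mulmxA.
have vp : 0 < (v *m v^T) 0 0.
  rewrite mxE; have [j hj] : exists j, v 0 j != 0.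
    apply: NNPP => H; apply/negP: vne; apply/negPn/eqP/matrixP => i k.
    rewrite (ord1 i) mxE; apply: NNPP => hk; apply: H; exists k; exact/eqP.
  rewrite (bigD1 j) //= ltr_pwDl //.
    by rewrite mxE -expr2 exprn_even_gt0 //.
  apply: sumr_ge0 => i _; rewrite mxE -expr2; exact: sqr_ge0.
by rewrite pmulr_rge0.
Qed.

End Opt.

Section Null.
Variable R : realType.

Definition nullset (J : finType) (P : (J -> R) -> Prop) : Prop :=
  forall eps : R, 0 < eps ->
    exists lo hi : nat -> J -> R,
      (forall k j, lo k j <= hi k j) /\
      (forall y, P y -> exists k, forall j, lo k j <= y j <= hi k j) /\
      (forall K : nat, \sum_(k < K) \prod_j (hi k j - lo k j) <= eps).

Lemma sum_sub_le (T : eqType) (s s' : seq T) (F : T -> R) :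
  uniq s -> uniq s' -> {subset s <= s'} -> (forall x, x \in s' -> 0 <= F x) ->
  \sum_(x <- s) F x <= \sum_(x <- s') F x.
Proof.
move=> us us' ss F0.
rewrite [X in _ <= X](bigID (fun x => x \in s)) /=.
have -> : \sum_(i <- s' | i \in s) F i = \sum_(x <- s) F x.
  rewrite -big_filter; apply: perm_big; apply: uniq_perm => //.
    exact: filter_uniq.
  by move=> x; rewrite mem_filter; case hx: (x \in s) => //=; rewrite ss.
rewrite lerDl; rewrite big_seq_cond; apply: sumr_ge0 => i /andP [hi _].
exact: F0.
Qed.

Lemma reindex_le (g : nat -> nat -> R) K : (forall a b, 0 <= g a b) ->
  \sum_(k < K) g (Cantor.of_nat k).1 (Cantor.of_nat k).2 <=
  \sum_(a < K) \sum_(b < K) g a b.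
Proof.
move=> g0.
have -> : \sum_(k < K) g (Cantor.of_nat k).1 (Cantor.of_nat k).2 =
   \sum_(x <- [seq Cantor.of_nat k | k <- iota 0 K]) g x.1 x.2.
  by rewrite big_map -(big_mkord xpredT (fun k => g (Cantor.of_nat k).1 (Cantor.of_nat k).2)) /index_iota subn0.
have -> : \sum_(a < K) \sum_(b < K) g a b =
   \sum_(x <- [seq (a, b) | a <- iota 0 K, b <- iota 0 K]) g x.1 x.2.
  rewrite big_allpairs -(big_mkord xpredT (fun a => \sum_(b < K) g a b)) /index_iota subn0.
  by apply: eq_bigr => a _; rewrite -(big_mkord xpredT (fun b => g a b)) /index_iota subn0.
apply: sum_sub_le => //.
- rewrite map_inj_uniq ?iota_uniq //; apply: (can_inj Cantor.cancel_to_of).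
- apply: allpairs_uniq; try exact: iota_uniq.
  by move=> [a b] [c d] _ _ /= [-> ->].
- move=> x /mapP [k hk ->]; apply/allpairsP.
  exists (Cantor.of_nat k); rewrite !mem_iota /=.
  have := Cantor.to_nat_non_decreasing (Cantor.of_nat k).1 (Cantor.of_nat k).2.
  rewrite -surjective_pairing Cantor.cancel_to_of.
  move: hk; rewrite mem_iota /= => hk h; split; [lia|lia|].
  by [].
Qed.

Lemma geom_sum (eps : R) K : \sum_(j < K) eps / 2 ^+ j.+1 = eps - eps / 2 ^+ K.
Proof.
elim: K => [|K IH]; first by rewrite big_ord0 expr0 divr1 subrr.
rewrite big_ord_recr /= IH exprS.
have h2 : (2 : R) ^+ K != 0 by rewrite expf_neq0 // pnatr_eq0.
field; by rewrite h2.
Qed.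

Lemma geom_le (eps : R) K : 0 <= eps -> \sum_(j < K) eps / 2 ^+ j.+1 <= eps.
Proof.
move=> he; rewrite geom_sum lerBlDr lerDl; apply: divr_ge0 => //.
exact: exprn_ge0.
Qed.

Variable J : finType.
Variable j0 : J.

Lemma null_sig (P : (J -> R) -> Prop) eps : 0 < eps -> nullset P ->
  { lh : (nat -> J -> R) * (nat -> J -> R) |
      (forall k j, lh.1 k j <= lh.2 k j) /\
      (forall y, P y -> exists k, forall j, lh.1 k j <= y j <= lh.2 k j) /\
      (forall K : nat, \sum_(k < K) \prod_j (lh.2 k j - lh.1 k j) <= eps) }.
Proof.
move=> he hP; apply: constructive_indefinite_description.
have [lo [hi H]] := hP eps he; by exists (lo, hi).
Qed.

Lemma nullset_union (T : countType) (P : T -> (J -> R) -> Prop) :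
  (forall t, nullset (P t)) -> nullset (fun y => exists t, P t y).
Proof.
move=> HP eps he.
have epos : forall j : nat, 0 < eps / 2 ^+ j.+1.
  by move=> j; apply: divr_gt0 => //; apply: exprn_gt0.
pose B t := sval (null_sig (epos (pickle t)) (HP t)).
have BP t := svalP (null_sig (epos (pickle t)) (HP t)).
pose lo (k : nat) : J -> R := let ji := Cantor.of_nat k in
  match pickle_inv ji.1 with Some t => (B t).1 ji.2 | None => fun _ => 0 end.
pose hi (k : nat) : J -> R := let ji := Cantor.of_nat k in
  match pickle_inv ji.1 with Some t => (B t).2 ji.2 | None => fun _ => 0 end.
exists lo, hi; split; [|split].
- move=> k j; rewrite /lo /hi; case: (pickle_inv _) => [t|//].
  by have [h1 _] := BP t; apply: h1.
- move=> y [t hy]; have [_ [h2 _]] := BP t.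
  have [i hi'] := h2 y hy.
  exists (Cantor.to_nat (pickle t, i)).
  by rewrite /lo /hi Cantor.cancel_of_to /= pickleK_inv.
- move=> K.
  pose g a b := \prod_j ((match pickle_inv a with Some t => (B t).2 b | None => fun _ => 0 end) j
                      - (match pickle_inv a with Some t => (B t).1 b | None => fun _ => 0 end) j).
  have g0 : forall a b, 0 <= g a b.
    move=> a b; rewrite /g; case: (pickle_inv a) => [t|].
      apply: prodr_ge0 => j _; rewrite subr_ge0; by have [h1 _] := BP t; apply: h1.
    by apply: prodr_ge0 => j _; rewrite subrr.
  apply: le_trans (reindex_le K g0) _.
  apply: le_trans (geom_le K (ltW he)).
  apply: ler_sum => a _.
  rewrite /g; case E: (pickle_inv a) => [t|].
    have [_ [_ h3]] := BP t.
    have ha : pickle t = a.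
      by have := @pickle_invK T a; rewrite E.
    by rewrite -ha; apply: h3.
  rewrite big1 ?divr_ge0 ?exprn_ge0 ?ltW //.
  by move=> b _; rewrite (bigD1 j0) //= subrr mul0r.
Qed.

Lemma nullset_sub (P Q : (J -> R) -> Prop) : (forall y, P y -> Q y) -> nullset Q -> nullset P.
Proof.
move=> PQ hQ eps he; have [lo [hi [h1 [h2 h3]]]] := hQ eps he.
exists lo, hi; split => //; split => // y /PQ; exact: h2.
Qed.

End Null.

Section Img.
Variable R : realType.

Definition cube (I : Type) (R0 : R) (x : I -> R) := forall i, `|x i| <= R0.

Lemma grid (k : nat) (R0 t : R) : (0 < k)%N -> 0 < R0 -> `|t| <= R0 ->
  exists s : 'I_k, `|t - (- R0 + (2 * s + 1)%:R * (R0 / k%:R))| <= R0 / k%:R.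
Proof.
move=> hk hR ht.
set h := R0 / k%:R.
have kh : k%:R * h = R0 by rewrite /h mulrC -mulrA mulVf ?mulr1 // pnatr_eq0 -lt0n.
have hpos : 0 < h by rewrite /h divr_gt0 // ltr0n.
pose P := fun s : nat => (s < k)%N && (- R0 + (2 * s)%:R * h <= t).
have exP : exists s, P s.
  exists 0%N; rewrite /P hk /= mul0r addr0.
  by move: ht; rewrite ler_norml => /andP [? ?].
have ubP : forall s, P s -> (s <= k.-1)%N by move=> s /andP [h1 _]; lia.
case: (ex_maxnP exP ubP) => s /andP [hs1 hs2] hmax.
exists (Ordinal hs1) => /=.
have up : t <= - R0 + (2 * s + 2)%:R * h.
  case: (ltnP s.+1 k) => hs.
    have : ~~ P s.+1 by apply/negP => /hmax; lia.
    rewrite /P hs /= -ltNge => hlt.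
    by apply: ltW; move: hlt; have -> : (2 * s.+1 = 2 * s + 2)%N by lia.
  have -> : (2 * s + 2 = 2 * k)%N by lia.
  rewrite natrM -mulrA kh.
  by move: ht; rewrite ler_norml => /andP [? ?]; lra.
rewrite ?natrD ?natrM in hs2 up *.
rewrite ler_norml; apply/andP; split; lra.
Qed.

Lemma sum_prefix_eq (N K : nat) (c : R) :
  \sum_(m < K) (if (m < N)%N then c else 0) = (minn K N)%:R * c.
Proof.
elim: K => [|K IH]; first by rewrite big_ord0 min0n mul0r.
rewrite big_ord_recr /= IH.
case: (ltnP K N) => hK.
  have -> : minn K.+1 N = K.+1 by lia.
  by rewrite -addn1 natrD mulrDl mul1r.
have -> : minn K.+1 N = N by lia.
by rewrite addr0.
Qed.

Lemma sum_prefix (N K : nat) (c : R) : 0 <= c ->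
  \sum_(m < K) (if (m < N)%N then c else 0) <= N%:R * c.
Proof.
move=> c0; rewrite sum_prefix_eq ler_wpM2r // ler_nat; lia.
Qed.

Lemma vol_bound (k d D : nat) (c0 eps : R) : (0 < k)%N -> (d < D)%N -> 0 <= c0 ->
  0 < eps -> c0 / eps < k%:R ->
  (k ^ d)%:R * (c0 / (k%:R ^+ D)) <= eps.
Proof.
move=> hk hdD c0p he hlt.
set K := k%:R.
have Kp : 0 < K by rewrite ltr0n.
have K1 : 1 <= K by rewrite ler1n.
have eD : D = (d + (D - d).-1.+1)%N by lia.
rewrite eD exprD exprS natrX.
have Kd : 0 < K ^+ d by apply: exprn_gt0.
have Ke : 1 <= K ^+ (D - d).-1 by apply: exprn_ege1.
set a := K ^+ d; set b := K ^+ (D - d).-1.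
have bp : 0 < b by exact: lt_le_trans ltr01 Ke.
have -> : a * (c0 / (a * (K * b))) = c0 / (K * b).
  by field; rewrite !gt_eqF.
rewrite ler_pdivrMr; last exact: mulr_gt0.
move: hlt; rewrite ltr_pdivrMr // => hlt.
apply: (le_trans (ltW hlt)); rewrite -/K mulrC mulrA ler_peMr //; rewrite ?mulr_ge0 // ltW.
all: try exact: isT. all: try exact: he. all: try exact: I.
Qed.

Lemma image_null (I J : finType) (j0 : J) (F : (I -> R) -> J -> R) (R0 L : R) :
  0 < R0 -> 0 <= L -> (#|I| < #|J|)%N ->
  (forall x y (dl : R), cube R0 x -> cube R0 y -> 0 <= dl ->
     (forall i, `|x i - y i| <= dl) -> forall j, `|F x j - F y j| <= L * dl) ->
  nullset (fun z => exists x, cube R0 x /\ forall j, z j = F x j).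
Proof.
move=> hR hL hd hF eps he.
pose c0 := (2 * L * R0) ^+ #|J|.
have c0p : 0 <= c0 by rewrite /c0 exprn_ge0 // !mulr_ge0 // ltW.
pose k' := Num.Def.archi_bound (c0 / eps).
pose k := k'.+1.
have hk : (0 < k)%N by [].
have hlt : c0 / eps < k%:R.
  apply: lt_le_trans (archi_boundP _) _; first by rewrite divr_ge0 // ltW.
  by rewrite ler_nat.
pose h := R0 / k%:R.
have hp : 0 < h by rewrite /h divr_gt0 // ltr0n.
pose S := {ffun I -> 'I_k}.
pose s0 : S := [ffun _ => ord0].
pose center (s : S) : I -> R := fun i => - R0 + (2 * s i + 1)%:R * h.
pose lo (m : nat) (j : J) : R :=
  if (m < #|S|)%N then F (center (nth s0 (enum S) m)) j - L * h else 0.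
pose hi (m : nat) (j : J) : R :=
  if (m < #|S|)%N then F (center (nth s0 (enum S) m)) j + L * h else 0.
have Lh : 0 <= L * h by rewrite mulr_ge0 // ltW.
exists lo, hi; split; [|split].
- move=> m j; rewrite /lo /hi; case: ifP => // _; lra.
- move=> z [x [cx zx]].
  have [sf hsf] : exists sf : I -> 'I_k, forall i,
      `|x i - (- R0 + (2 * sf i + 1)%:R * h)| <= h.
    apply: (@fin_all_exists I (fun _ => 'I_k) (fun i s => `|x i - (- R0 + (2 * s + 1)%:R * h)| <= h)).
    move=> i; exact: grid.
  pose s : S := finfun sf.
  have cc : cube R0 (center s).
    move=> i; rewrite /center /s ffunE.
    have a1 : 0 <= (2 * sf i + 1)%:R * h by rewrite mulr_ge0 // ltW.
    have a2 : (2 * sf i + 1)%:R * h <= (2 * k)%:R * h.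
      apply: ler_wpM2r; [exact: ltW | rewrite ler_nat; have := ltn_ord (sf i); lia].
    have a3 : (2 * k)%:R * h = 2 * R0.
      rewrite natrM /h; field; by rewrite pnatr_eq0.
    rewrite ler_norml; apply/andP; split; lra.
  have hxs : forall i, `|x i - center s i| <= h.
    by move=> i; rewrite /center /s ffunE; apply: hsf.
  exists (index s (enum S)) => j.
  have mS : (index s (enum S) < #|S|)%N by rewrite cardE index_mem mem_enum.
  rewrite /lo /hi mS nth_index ?mem_enum // zx.
  have := hF x (center s) h cx cc (ltW hp) hxs j.
  rewrite ler_norml => /andP [a b]; apply/andP; split; lra.
- move=> K.
  have -> : \sum_(m < K) \prod_j (hi m j - lo m j) =
      \sum_(m < K) (if (m < #|S|)%N then (2 * L * h) ^+ #|J| else 0).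
    apply: eq_bigr => m _; rewrite /lo /hi; case: ifP => _.
      rewrite -prodr_const; apply: eq_bigr => j _; ring.
    by rewrite (bigD1 j0) //= subrr mul0r.
  apply: le_trans (sum_prefix _ _ _) _.
    apply: exprn_ge0; apply: mulr_ge0; [apply: mulr_ge0 => // | exact: ltW].
  have -> : #|S| = (k ^ #|I|)%N by rewrite card_ffun card_ord.
  have -> : (2 * L * h) ^+ #|J| = c0 / (k%:R ^+ #|J|).
    by rewrite /c0 /h mulrA expr_div_n.
  exact: vol_bound.
Qed.

End Img.

Section Lip.
Variable R : realType.
Variable I : finType.
Variable R0 : R.
Hypothesis R0p : 0 <= R0.

Definition lip1 (f : (I -> R) -> R) := exists K L : R, 0 <= K /\ 0 <= L /\
  forall x, cube R0 x -> `|f x| <= K /\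
    forall y dl, cube R0 y -> 0 <= dl -> (forall i, `|x i - y i| <= dl) ->
      `|f x - f y| <= L * dl.

Lemma lip1_ext f g : (forall x, f x = g x) -> lip1 f -> lip1 g.
Proof.
move=> e [K [L [K0 [L0 H]]]]; exists K, L; do 2 split => //.
move=> x cx; have [h1 h2] := H x cx; rewrite -e; split => // y dl cy d0 hd.
by rewrite -e; apply: h2.
Qed.

Lemma lip1_cst c : lip1 (fun _ => c).
Proof.
exists `|c|, 0; do 2 split => //; move=> x _; split => // y dl _ d0 _.
by rewrite subrr normr0 mul0r.
Qed.

Lemma lip1_coord i : lip1 (fun x => x i).
Proof.
exists R0, 1; do 2 split => //; move=> x cx; split; first exact: cx.
by move=> y dl _ _ hd; rewrite mul1r.
Qed.

Lemma lip1_add f g : lip1 f -> lip1 g -> lip1 (fun x => f x + g x).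
Proof.
move=> [K1 [L1 [K10 [L10 H1]]]] [K2 [L2 [K20 [L20 H2]]]].
exists (K1 + K2), (L1 + L2); split; first exact: addr_ge0.
split; first exact: addr_ge0.
move=> x cx; have [a1 b1] := H1 x cx; have [a2 b2] := H2 x cx; split.
  by apply: le_trans (ler_normD _ _) _; apply: lerD.
move=> y dl cy d0 hd.
have := b1 y dl cy d0 hd; have := b2 y dl cy d0 hd => c2 c1.
have -> : f x + g x - (f y + g y) = (f x - f y) + (g x - g y) by ring.
apply: le_trans (ler_normD _ _) _; rewrite mulrDl; exact: lerD.
Qed.

Lemma lip1_mul f g : lip1 f -> lip1 g -> lip1 (fun x => f x * g x).
Proof.
move=> [K1 [L1 [K10 [L10 H1]]]] [K2 [L2 [K20 [L20 H2]]]].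
exists (K1 * K2), (K1 * L2 + K2 * L1); split; first exact: mulr_ge0.
split; first by apply: addr_ge0; apply: mulr_ge0.
move=> x cx; have [a1 b1] := H1 x cx; split.
  by rewrite normrM; apply: ler_pM => //; have [] := H2 x cx.
move=> y dl cy d0 hd.
have [a2 b2] := H2 x cx.
have [a1y _] := H1 y cy.
have c1 := b1 y dl cy d0 hd; have c2 := b2 y dl cy d0 hd.
have -> : f x * g x - f y * g y = f x * (g x - g y) + g y * (f x - f y) by ring.
apply: le_trans (ler_normD _ _) _; rewrite mulrDl !normrM -!mulrA.
have [a2y _] := H2 y cy.
apply: lerD; apply: ler_pM => //.
Qed.

Lemma lip1_opp f : lip1 f -> lip1 (fun x => - f x).
Proof.
move=> h; apply: (lip1_ext (f := fun x => (-1) * f x)); first by move=> x; rewrite mulN1r.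
apply: lip1_mul => //; exact: lip1_cst.
Qed.

Lemma lip1_sum (T : Type) (r : seq T) (P : pred T) (f : T -> (I -> R) -> R) :
  (forall k, lip1 (f k)) -> lip1 (fun x => \sum_(k <- r | P k) f k x).
Proof.
move=> hf; elim: r => [|a r IH].
  by apply: (lip1_ext (f := fun _ => 0)); [move=> x; rewrite big_nil | exact: lip1_cst].
case hP: (P a).
  apply: (lip1_ext (f := fun x => f a x + \sum_(k <- r | P k) f k x)).
    by move=> x; rewrite big_cons hP.
  exact: lip1_add.
apply: (lip1_ext (f := fun x => \sum_(k <- r | P k) f k x)) => //.
by move=> x; rewrite big_cons hP.
Qed.

Definition lipM m n (F : (I -> R) -> 'M[R]_(m, n)) := forall i j, lip1 (fun x => F x i j).

Lemma lipM_cst m n (M : 'M[R]_(m,n)) : lipM (fun _ => M).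
Proof. by move=> i j; exact: lip1_cst. Qed.

Lemma lipM_add m n (F G : (I -> R) -> 'M[R]_(m, n)) : lipM F -> lipM G -> lipM (fun x => F x + G x).
Proof.
move=> hF hG i j; apply: (lip1_ext (f := fun x => F x i j + G x i j)).
  by move=> x; rewrite mxE.
exact: lip1_add.
Qed.

Lemma lipM_mul m n p (F : (I -> R) -> 'M[R]_(m, n)) (G : (I -> R) -> 'M[R]_(n, p)) :
  lipM F -> lipM G -> lipM (fun x => F x *m G x).
Proof.
move=> hF hG i j; apply: (lip1_ext (f := fun x => \sum_k F x i k * G x k j)).
  by move=> x; rewrite mxE.
apply: lip1_sum => k; exact: lip1_mul.
Qed.

Lemma lipM_tr m n (F : (I -> R) -> 'M[R]_(m, n)) : lipM F -> lipM (fun x => (F x)^T).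
Proof.
move=> hF i j; apply: (lip1_ext (f := fun x => F x j i)); first by move=> x; rewrite mxE.
exact: hF.
Qed.

Lemma lipM_scale m n (f : (I -> R) -> R) (M : 'M[R]_(m,n)) : lip1 f -> lipM (fun x => f x *: M).
Proof.
move=> hf i j; apply: (lip1_ext (f := fun x => f x * M i j)); first by move=> x; rewrite mxE.
apply: lip1_mul => //; exact: lip1_cst.
Qed.

Lemma lipM_sum m n (T : Type) (r : seq T) (F : T -> (I -> R) -> 'M[R]_(m,n)) :
  (forall k, lipM (F k)) -> lipM (fun x => \sum_(k <- r) F k x).
Proof.
move=> hF i j; apply: (lip1_ext (f := fun x => \sum_(k <- r) F k x i j)).
  by move=> x; rewrite summxE.
apply: lip1_sum => k; exact: hF.
Qed.

Lemma lip_uniform (J : finType) (G : (I -> R) -> J -> R) :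
  (forall j, lip1 (fun x => G x j)) ->
  exists L : R, 0 <= L /\ forall x y dl, cube R0 x -> cube R0 y -> 0 <= dl ->
     (forall i, `|x i - y i| <= dl) -> forall j, `|G x j - G y j| <= L * dl.
Proof.
move=> hG.
have [Lf hL] : exists Lf : J -> R, forall j, 0 <= Lf j /\ forall x y dl, cube R0 x -> cube R0 y -> 0 <= dl ->
     (forall i, `|x i - y i| <= dl) -> `|G x j - G y j| <= Lf j * dl.
  apply: (@fin_all_exists J (fun _ => R) (fun j L => 0 <= L /\ forall x y dl, cube R0 x -> cube R0 y -> 0 <= dl ->
     (forall i, `|x i - y i| <= dl) -> `|G x j - G y j| <= L * dl)).
  move=> j; have [K [L [_ [L0 H]]]] := hG j; exists L; split => // x y dl cx cy d0 hd.
  by have [_ h] := H x cx; apply: h.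
exists (\sum_j Lf j); split; first by apply: sumr_ge0 => j _; have [] := hL j.
move=> x y dl cx cy d0 hd j.
have [_ h] := hL j; apply: le_trans (h x y dl cx cy d0 hd) _.
apply: ler_wpM2r => //; rewrite (bigD1 j) //= lerDl; apply: sumr_ge0 => k _.
by have [] := hL k.
Qed.

End Lip.

Lemma card_upper n (T : {set 'I_n}) :
  (2 * #|[pred ab : 'I_n * 'I_n | (ab.1 <= ab.2)%N && (ab.1 \in T) && (ab.2 \in T)]|
   = #|T| * #|T|.+1)%N.
Proof.
set U := [set ab : 'I_n * 'I_n | (ab.1 <= ab.2)%N && (ab.1 \in T) && (ab.2 \in T)].
set Lw := [set ab : 'I_n * 'I_n | (ab.2 <= ab.1)%N && (ab.1 \in T) && (ab.2 \in T)].
have e1 : #|[pred ab : 'I_n * 'I_n | (ab.1 <= ab.2)%N && (ab.1 \in T) && (ab.2 \in T)]| = #|U|.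
  by apply: eq_card => ab; rewrite [in RHS]inE.
have swapi : injective (fun ab : 'I_n * 'I_n => (ab.2, ab.1)) by move=> [a b] [c d] /= [-> ->].
have e2 : #|Lw| = #|U|.
  have -> : Lw = [set (ab.2, ab.1) | ab in U].
    apply/setP => [[a b]]; rewrite inE /=; apply/idP/imsetP.
      move=> /andP [/andP [h1 h2] h3]; exists (b, a) => //.
      by rewrite inE /= h1 h2 h3.
    by move=> [[c d]]; rewrite inE /= => /andP [/andP [h1 h2] h3] [-> ->]; rewrite h1 h2 h3.
  exact: card_imset.
have e3 : U :|: Lw = setX T T.
  apply/setP => [[a b]]; rewrite !inE /=.
  case: (a \in T); case: (b \in T); rewrite ?andbF ?andbT //=.
  by rewrite leq_total.
have e4 : U :&: Lw = [set (a, a) | a in T].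
  apply/setP => [[a b]]; rewrite !inE /=; apply/idP/imsetP.
    move=> /andP [/andP [/andP [h1 h2] h3] /andP [/andP [h4 _] _]].
    have eab : a = b by apply/val_inj/eqP; rewrite eqn_leq h1 h4.
    by subst; exists b.
  by move=> [c hc [-> ->]]; rewrite leqnn hc.
have := cardsUI U Lw; rewrite e3 e4 cardsX card_imset; last by move=> a c [].
rewrite e1 e2 mulnS; set t := (#|T| * #|T|)%N; lia.
Qed.

Section Constr.
Variable R : realType.
Variables n m p : nat.
Variable A : 'I_m -> 'M[R]_n.

Definition Amat := \matrix_(i < m) mxvec (A i).

Definition K1 (f : {ffun 'I_p -> 'I_n}) := {ij : 'I_p * 'I_n | ij.2 \notin codom f}.
Definition K2 (f : {ffun 'I_p -> 'I_n}) :=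
  {ab : 'I_n * 'I_n | (ab.1 <= ab.2)%N && (ab.1 \notin codom f) && (ab.2 \notin codom f)}.
Definition Dom f := (K1 f + K2 f + 'I_(\rank Amat))%type.

Definition Rf (f : {ffun 'I_p -> 'I_n}) : 'M[R]_(p, n) := rowsub f 1%:M.
Definition Dm f : 'M[R]_n := 1%:M - (Rf f)^T *m Rf f.
Definition Xm f (x : Dom f -> R) : 'M[R]_(n, p) :=
  \matrix_(t, i) match (insub (i, t) : option (K1 f)) with
                 | Some k => x (inl (inl k)) | None => 0 end.
Definition Mm f (x : Dom f -> R) : 'M[R]_n :=
  \matrix_(a, b) match (insub (a, b) : option (K2 f)) with
                 | Some k => x (inl (inr k))
                 | None => match (insub (b, a) : option (K2 f)) with
                           | Some k => x (inl (inr k)) | None => 0 end end.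
Definition Vm f (x : Dom f -> R) : 'M[R]_n :=
  \sum_(k < \rank Amat) x (inr k) *: vec_mx (row k (row_base Amat)).
Definition Qm f (x : Dom f -> R) := Dm f + Xm x *m Rf f.
Definition Fm f (x : Dom f -> R) := (Qm x)^T *m Mm x *m Qm x + Vm x.

Lemma lipM_Fm f (R0 : R) : 0 <= R0 -> lipM R0 (@Fm f).
Proof.
move=> h0.
have hX : lipM R0 (@Xm f).
  move=> t i; apply: (lip1_ext (f := fun x => match (insub (i, t) : option (K1 f)) with
                 | Some k => x (inl (inl k)) | None => 0 end)); first by move=> x; rewrite mxE.
  case: (insub _) => [k|]; [exact: lip1_coord | exact: lip1_cst].
have hM : lipM R0 (@Mm f).
  move=> a b'; apply: (lip1_ext (f := fun x => match (insub (a, b') : option (K2 f)) with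
                 | Some k => x (inl (inr k))
                 | None => match (insub (b', a) : option (K2 f)) with
                           | Some k => x (inl (inr k)) | None => 0 end end)); first by move=> x; rewrite mxE.
  case: (insub _) => [k|]; first exact: lip1_coord.
  case: (insub _) => [k|]; [exact: lip1_coord | exact: lip1_cst].
have hQ : lipM R0 (@Qm f).
  apply: lipM_add => //; first exact: lipM_cst.
  apply: lipM_mul => //; exact: lipM_cst.
apply: lipM_add.
  apply: lipM_mul => //; apply: lipM_mul => //; exact: lipM_tr.
apply: lipM_sum => k; apply: lipM_scale => //; exact: lip1_coord.
Qed.


Lemma Rf_mul (f : {ffun 'I_p -> 'I_n}) q (W : 'M[R]_(n, q)) : Rf f *m W = rowsub f W.
Proof. by rewrite /Rf mul_rowsub_mx mul1mx. Qed.

Lemma RfRft (f : {ffun 'I_p -> 'I_n}) : injective f -> Rf f *m (Rf f)^T = 1%:M.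
Proof.
move=> fi; rewrite Rf_mul; apply/matrixP => i j.
rewrite !mxE (inj_eq fi) eq_sym //.
Qed.

Lemma member (C S : 'M[R]_n) (Y : 'M[R]_(n,p)) (nu : 'I_m -> R) :
  sym_mx S -> S *m Y = 0 -> C = S + Aadj A nu -> \rank Y = p ->
  exists f : {ffun 'I_p -> 'I_n}, injective f /\ exists x : Dom f -> R, C = Fm x.
Proof.
move=> sS SY eC rY.
have [g [gi gu]] : exists g : 'I_p -> 'I_n, injective g /\ rowsub g Y \in unitmx.
  have H : forall r (g : 'I_r -> 'I_n), injective g -> row_free (rowsub g Y) -> r = p ->
      exists g : 'I_p -> 'I_n, injective g /\ rowsub g Y \in unitmx.
    by move=> r g0 g0i g0f e; subst r; exists g0; split => //; rewrite -row_free_unit.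
  apply: (H _ (maxrankfun Y)) => //; [exact: maxrankfun_inj | exact: maxrowsub_free].
pose f : {ffun 'I_p -> 'I_n} := finfun g.
have fg : forall i, f i = g i by move=> i; rewrite ffunE.
have fi : injective f by move=> i j; rewrite !fg => /gi.
exists f; split => //.
set Yf := rowsub f Y.
have Yfu : Yf \in unitmx by rewrite /Yf (eq_rowsub _ fg).
set Z := Y *m invmx Yf.
have RZ : Rf f *m Z = 1%:M by rewrite /Z mulmxA Rf_mul mulmxV.
set P := 1%:M - Z *m Rf f.
have SP : S *m P = S by rewrite /P mulmxBr mulmx1 mulmxA /Z mulmxA SY !mul0mx subr0.
set D := Dm f.
have sD : D^T = D by rewrite /D /Dm linearB /= trmx1 trmx_mul trmxK.
have RP : Rf f *m P = 0 by rewrite /P mulmxBr mulmx1 mulmxA RZ mul1mx subrr.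
have DP : D *m P = P by rewrite /D /Dm mulmxBl mul1mx -mulmxA RP mulmx0 subr0.
have RD : Rf f *m D = 0 by rewrite /D /Dm mulmxBr mulmx1 mulmxA RfRft // mul1mx subrr.
have PSP : S = P^T *m (D *m S *m D) *m P.
  have e1 : P^T *m S *m P = S.
    have -> : P^T *m S = S by rewrite -[S in P^T *m S]sS -trmx_mul SP sS.
    exact: SP.
  have -> : P^T *m (D *m S *m D) *m P = (D *m P)^T *m S *m (D *m P).
    by rewrite trmx_mul sD !mulmxA.
  by rewrite DP e1.
have PD : P = D + (- (D *m Z)) *m Rf f.
  by rewrite -DP /P mulmxBr mulmx1 mulNmx mulmxA.
have Dcod : forall j b, D (f j) b = 0.
  move=> j b; have := congr1 (fun M : 'M[R]_(p,n) => M j b) RD; rewrite Rf_mul mxE.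
  by move=> ->; rewrite mxE.
have DZcod : forall j i, (D *m Z) (f j) i = 0.
  move=> j i; have := congr1 (fun M : 'M[R]_(p,p) => M j i) (congr1 (fun M => M *m Z) RD).
  by rewrite mul0mx -mulmxA Rf_mul mxE [in X in _ = X -> _]mxE.
set T := D *m S *m D.
have sT : T^T = T by rewrite /T !trmx_mul sD sS mulmxA.
have Tcod : forall j b, T (f j) b = 0.
  have RT : Rf f *m T = 0 by rewrite /T !mulmxA RD !mul0mx.
  move=> j b; have := congr1 (fun M : 'M[R]_(p,n) => M j b) RT.
  by rewrite Rf_mul mxE [in X in _ = X -> _]mxE.
have Tcod2 : forall a j, T a (f j) = 0.
  by move=> a j; rewrite -sT mxE Tcod.
have [w hw] : exists w : 'rV[R]_(\rank Amat), mxvec (Aadj A nu) = w *m row_base Amat.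
  apply/submxP.
  have -> : mxvec (Aadj A nu) = (\row_i nu i) *m Amat.
    rewrite mulmx_sum_row /Aadj linear_sum /=; apply: eq_bigr => i _.
    by rewrite linearZ /= mxE rowK.
  by rewrite eq_row_base submxMl.
pose x : Dom f -> R := fun k => match k with
  | inl (inl k1) => - (D *m Z) (val k1).2 (val k1).1
  | inl (inr k2) => T (val k2).1 (val k2).2
  | inr k3 => w 0 k3 end.
exists x.
have eX : Xm x = - (D *m Z).
  apply/matrixP => t i; rewrite mxE [RHS]mxE.
  case: insubP => [k hk ek|hk] /=.
    by rewrite /x ek.
  move: hk; rewrite /= negbK => /codomP [j ->].
  by rewrite DZcod oppr0.
have eM : Mm x = T.
  apply/matrixP => a c; rewrite [LHS]mxE.
  case: insubP => [k hk ek|hk] /=; first by rewrite /x ek.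
  case: insubP => [k hk2 ek|hk2] /=.
    rewrite /x ek /=; have := congr1 (fun M : 'M[R]_n => M a c) sT.
    by rewrite [in X in X = _ -> _]mxE.
  case ha : (a \in codom f).
    by move/codomP: ha => [j ->]; rewrite Tcod.
  case hc : (c \in codom f).
    by move/codomP: hc => [j ->]; rewrite Tcod2.
  exfalso; move: hk hk2; rewrite /= ha hc /= !andbT => /negP h1 /negP h2.
  by case: (leqP a c) => h; [apply: h1 | apply: h2; apply: ltnW].
have eV : Vm x = Aadj A nu.
  rewrite /Vm -[Aadj A nu]mxvecK hw mulmx_sum_row linear_sum /=.
  by apply: eq_bigr => k _; rewrite linearZ.
rewrite /Fm /Qm eX eM eV -PD -PSP.
exact: eC.
Qed.

End Constr.

Section Final.
Variable R : realType.
Variables n m p : nat.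
Variable A : 'I_m -> 'M[R]_n.

Lemma card_dom (f : {ffun 'I_p -> 'I_n}) : injective f -> (rankA A < p * p.+1 %/ 2)%N ->
  (#|{: Dom A f}| < #|{: upper_idx n}|)%N.
Proof.
move=> fi hr.
rewrite /Dom !card_sum card_ord /K1 /K2 /upper_idx !card_sig.
set Tc := [set t : 'I_n | t \notin codom f].
have hc : #|Tc| + p = n.
  have := cardsC [set t : 'I_n | t \in codom f].
  have -> : #|[set t : 'I_n | t \in codom f]| = p by rewrite cardsE card_codom // card_ord.
  have -> : ~: [set t : 'I_n | t \in codom f] = Tc by apply/setP => t; rewrite !inE.
  by rewrite card_ord; lia.
have e1 : #|[pred ij : 'I_p * 'I_n | ij.2 \notin codom f]| = (p * #|Tc|)%N.
  have -> : (p * #|Tc| = #|setX [set: 'I_p] Tc|)%N by rewrite cardsX cardsT card_ord.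
  apply: eq_card => [[i t]]; by rewrite !inE.
have e2 : (2 * #|[pred ab : 'I_n * 'I_n | (ab.1 <= ab.2)%N && (ab.1 \notin codom f) &&
          (ab.2 \notin codom f)]| = #|Tc| * #|Tc|.+1)%N.
  rewrite -card_upper; congr (2 * _)%N; apply: eq_card => [[a c]].
  by rewrite !inE.
have e3 : (2 * #|[pred ij : 'I_n * 'I_n | (ij.1 <= ij.2)%N]| = n * n.+1)%N.
  have := card_upper [set: 'I_n]; rewrite cardsT card_ord => <-.
  congr (2 * _)%N; apply: eq_card => [[a c]].
  by rewrite !inE /= !andbT.
rewrite e1.
move: e2 e3 hr; rewrite /rankA.
set k2 := #|[pred ab : 'I_n * 'I_n | _]|.
set u := #|[pred ij : 'I_n * 'I_n | _]|.
set r := \rank _.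
set q := #|Tc|.
move=> e2 e3 hr.
have hr2 : (2 * r < p * p.+1)%N.
  have := leq_trunc_div (p * p.+1) 2; rewrite mulnC; lia.
move: hc e3; set nn := n => hc e3.
have hc2 : (q + p = nn)%N by exact: hc.
clear hc hr; clearbody k2 u r q nn; subst nn; nia.
Qed.


Lemma Aadj_sym nu : (forall i, sym_mx (A i)) -> sym_mx (Aadj A nu).
Proof.
move=> hA; rewrite /sym_mx /Aadj linear_sum /=; apply: eq_bigr => i _.
by rewrite linearZ /= hA.
Qed.

Lemma nullset_empty (J : finType) (j0 : J) (P : (J -> R) -> Prop) :
  (forall y, ~ P y) -> nullset P.
Proof.
move=> hP eps he; exists (fun _ _ => 0), (fun _ _ => 0); split => //; split.
  by move=> y /hP.
move=> K; rewrite big1 ?ltW // => k _.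
by rewrite (bigD1 j0) //= subrr mul0r.
Qed.

Lemma cube_bound (I : finType) (x : I -> R) : exists N : nat, cube N.+1%:R x.
Proof.
have s0 : 0 <= \sum_i `|x i| by apply: sumr_ge0.
exists (Num.Def.archi_bound (\sum_i `|x i|)) => i.
have h1 : `|x i| <= \sum_i `|x i| by rewrite (bigD1 i) //= lerDl; apply: sumr_ge0.
apply: (le_trans h1); apply: (le_trans (ltW (archi_boundP s0))).
by rewrite ler_nat.
Qed.

End Final.

Unset Implicit Arguments.

Theorem theorem1 (R : realType) (n m p : nat)
  (A : 'I_m -> 'M[R]_n) (b : 'I_m -> R) :
  (1 <= n)%N -> (1 <= m)%N -> (1 <= p)%N ->
  (forall i, sym_mx (A i)) ->
  (exists X : 'M[R]_n, SDP_feasible A b X) ->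
  (exists Y : 'M[R]_(n, p), Mp A b Y) ->
  (rankA A < p * p.+1 %/ 2)%N ->
  assumption1 p A b ->
  exists N : 'M[R]_n -> Prop, sym_null N /\
    forall C : 'M[R]_n, sym_mx C -> ~ N C ->
      forall Y : 'M[R]_(n, p), second_order_critical A b C Y ->
        P_optimal A b C Y /\ SDP_optimal A b C (Y *m Y^T).
Proof.
move=> n1 _ _ hA _ _ hr _.
pose NS (C : 'M[R]_n) := sym_mx C /\ exists t : {ffun 'I_p -> 'I_n} * nat,
  injective t.1 /\ exists x : Dom A t.1 -> R, cube t.2.+1%:R x /\ C = Fm x.
exists NS; split.
  split; first by move=> X [].
  move=> eps he.
  have j0 : upper_idx n by exists (Ordinal n1, Ordinal n1).
  have Hnull : nullset (fun z : upper_idx n -> R => exists X, NS X /\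
      forall ij : upper_idx n, z ij = X (val ij).1 (val ij).2).
    apply: (nullset_sub (Q := fun z => exists t : {ffun 'I_p -> 'I_n} * nat,
       injective t.1 /\ exists x : Dom A t.1 -> R, cube t.2.+1%:R x /\
         forall ij : upper_idx n, z ij = Fm x (val ij).1 (val ij).2)).
      move=> z [X [[_ [t [ti [x [cx eX]]]]] ez]]; exists t; split => //.
      by exists x; split => // ij; rewrite ez eX.
    apply: (nullset_union j0) => [[f N0]] /=.
    case: (boolP (injectiveb f)) => [/injectiveP fi|nfi]; last first.
      by apply: (nullset_empty j0) => y [/injectiveP hf]; rewrite hf in nfi.
    have R0p : 0 < N0.+1%:R :> R by rewrite ltr0n.
    have [L [L0 hL]] := lip_uniform (R0 := N0.+1%:R)
      (G := fun (x : Dom A f -> R) (ij : upper_idx n) => Fm x (val ij).1 (val ij).2)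
      (fun ij => lipM_Fm A f (ltW R0p) (val ij).1 (val ij).2).
    apply: (nullset_sub (Q := fun z => exists x : Dom A f -> R, cube N0.+1%:R x /\
        forall ij : upper_idx n, z ij = Fm x (val ij).1 (val ij).2)).
      by move=> z [_ h].
    apply: (image_null j0 R0p L0) => //.
    exact: card_dom.
  have [lo [hi [h1 [h2 h3]]]] := Hnull eps he.
  exists lo, hi; split => //; split => //.
  move=> X hX; have [k hk] := h2 (fun ij => X (val ij).1 (val ij).2) (ex_intro _ X (conj hX (fun _ => erefl))).
  by exists k.
move=> C sC nC Y hso.
have [[hY SY] _] := hso.
set S := Smat A C Y.
have eC : C = S + Aadj A (mu A C Y) by rewrite /S /Smat subrK.
have sS : sym_mx S.
  by rewrite /sym_mx /S /Smat linearB /= sC (Aadj_sym _ hA).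
have := rank_leq_col Y; rewrite leq_eqVlt => /orP [/eqP rY|rY].
  exfalso; apply: nC.
  have [f [fi [x ex]]] := member sS SY eC rY.
  have [N0 cx] := cube_bound x.
  split => //; exists (f, N0); split => //; exists x; split => //.
apply: (opt_of_psd hA sC hY eC SY).
exact: (deficient_psd hA rY hso).
Qed.
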